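(* Let $\Omega\subset\mathbb{R}^d$ be compact, $\mu$ a probability measure on $\Omega$, and $\Phi_N=\{\varphi_j\}_{j=1}^N\subset\mathcal{C}(\Omega)$ with $\sup_{x\in\Omega}|\varphi_j(x)|\le1$ for $1\le j\le N$. Let $r\ge0$, $A_1^r(\Phi_N):=\{\sum_{j=1}^Nc_j\varphi_j:\sum_{j=1}^N|c_j|j^r\le1\}$, and let $\mathbf{F}\subset\mathcal{C}(\Omega)$ satisfy $\operatorname{dist}(\mathbf{F},A_1^r(\Phi_N))_\infty:=\sup_{f\in\mathbf{F}}\inf_{g\in A_1^r(\Phi_N)}\sup_{x\in\Omega}|f(x)-g(x)|<\infty$. Then for any integer $v$ with $1\le v\le N/2$, any $m\in\mathbb{N}$ and any $\xi=(\xi^1,\dots,\xi^m)\in\Omega^m$, $$\sigma_{2v}(\mathbf{F},\Phi_N)_{L_2(\Omega,\mu_\xi)}\le v^{-r-\frac12}+\operatorname{dist}(\mathbf{F},A_1^r(\Phi_N))_\infty.$$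
   Context: $\mu_\xi=\frac12\mu+\frac1{2m}\sum_{j=1}^m\delta_{\xi^j}$. For $1\le w\le N$, $\Sigma_w(\Phi_N)$ is the union of all spaces $\operatorname{span}\{\varphi_j:j\in J\}$ with $J\subset\{1,\dots,N\}$, $|J|=w$; $\sigma_w(f,\Phi_N)_X=\inf_{g\in\Sigma_w(\Phi_N)}\|f-g\|_X$ and $\sigma_w(\mathbf{F},\Phi_N)_X=\sup_{f\in\mathbf{F}}\sigma_w(f,\Phi_N)_X$. *)

(* Defs.v *)
From HB Require Import structures.
From mathcomp Require Import all_boot all_order all_algebra.
From mathcomp Require Import all_classical all_reals all_analysis.
Set Implicit Arguments. Unset Strict Implicit. Unset Printing Implicit Defensive.
Import Order.TTheory GRing.Theory Num.Theory.
Import numFieldNormedType.Exports.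
Local Open Scope classical_set_scope.
Local Open Scope ring_scope.

Definition Rd (R : realType) (d : nat) := g_sigma_algebraType (@open 'rV[R]_d).

Section Defs.
Context {R : realType} {d : nat}.

(* mu_xi = 1/2 mu + 1/(2m) sum_{j=1}^m delta_{xi^j} *)
Definition mu_xi (mu : probability (Rd R d) R) (m : nat) (xi : 'I_m -> 'rV[R]_d) :=
  measure_add
    (mscale ((2^-1 : R)%:nng) mu)
    (mscale (((2 * m)%:R^-1 : R)%:nng)
       (msum (fun k : nat => if insub k is Some i then @dirac _ (Rd R d) (xi i) R
                             else @mzero _ (Rd R d) R) m)).

Definition L2dist (nu : {measure set (Rd R d) -> \bar R}) (Omega : set 'rV[R]_d)
  (f g : 'rV[R]_d -> R) : \bar R :=
  ((\int[nu]_(x in (Omega : set (Rd R d))) ((`|f x - g x| ^+ 2)%:E)) `^ (2^-1))%E.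

Definition supdist (Omega : set 'rV[R]_d) (f g : 'rV[R]_d -> R) : \bar R :=
  ereal_sup [set (`|f x - g x|)%:E | x in Omega].

Definition A1r (N : nat) (phi : 'I_N -> 'rV[R]_d -> R) (r : R) : set ('rV[R]_d -> R) :=
  [set g | exists c : 'I_N -> R,
     \sum_(j < N) `|c j| * (j.+1%:R `^ r) <= 1 /\
     g = (fun x => \sum_(j < N) c j * phi j x)].

Definition Sigma_w (N : nat) (phi : 'I_N -> 'rV[R]_d -> R) (w : nat) : set ('rV[R]_d -> R) :=
  [set g | exists (J : {set 'I_N}) (c : 'I_N -> R),
     #|J| = w /\ g = (fun x => \sum_(j in J) c j * phi j x)].

Definition sigma_w (nu : {measure set (Rd R d) -> \bar R}) (Omega : set 'rV[R]_d)
  (N : nat) (phi : 'I_N -> 'rV[R]_d -> R) (w : nat) (F : set ('rV[R]_d -> R)) : \bar R :=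
  ereal_sup [set ereal_inf [set L2dist nu Omega f g | g in Sigma_w phi w] | f in F].

Definition dist_inf (Omega : set 'rV[R]_d) (N : nat) (phi : 'I_N -> 'rV[R]_d -> R) (r : R)
  (F : set ('rV[R]_d -> R)) : \bar R :=
  ereal_sup [set ereal_inf [set supdist Omega f g | g in A1r phi r] | f in F].

End Defs.

(* Main.v *)
Require Import Defs.
From HB Require Import structures.
From mathcomp Require Import all_boot all_order all_algebra.
From mathcomp Require Import all_classical all_reals all_analysis.
Import Order.TTheory GRing.Theory Num.Theory.
Import numFieldNormedType.Exports.
Local Open Scope classical_set_scope.
Local Open Scope ring_scope.
From mathcomp Require Import measurable_realfun.
From mathcomp Require Import ring lra zify.
Set Implicit Arguments. Unset Strict Implicit. Unset Printing Implicit Defensive.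


Lemma Rd_open_meas (R : realType) d (U : set 'rV[R]_d) : open U -> measurable (U : set (Rd R d)).
Proof. by move=> oU; apply: sub_sigma_algebra. Qed.

Lemma Rd_compact_meas (R : realType) d (U : set 'rV[R]_d) : compact U -> measurable (U : set (Rd R d)).
Proof.
move=> /compact_closed => /(_ (@norm_hausdorff _ _)) /closed_openC /Rd_open_meas /measurableC.
by rewrite setCK.
Qed.

Lemma Rd_cont_meas (R : realType) d (D : set 'rV[R]_d) (f : 'rV[R]_d -> R) :
  measurable (D : set (Rd R d)) -> {within D, continuous f} -> measurable_fun (D : set (Rd R d)) f.
Proof.
move=> mD /continuousP cf; apply: (measurability _ (RGenOpens.measurableE R)).
move=> _ [_ [a [b ->] <-]].
have := cf _ (@interval_open _ (BRight a) (BLeft b) isT isT).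
case/open_subspaceP => V oV VD.
rewrite setIC -VD; apply: measurableI => //; exact: Rd_open_meas.
Qed.

Lemma mscaleE' d (T : sigmaRingType d) (R : realFieldType) (r : {nonneg R}) (mu : measure T R) A :
  mscale r mu A = (r%:num%:E * mu A)%E.
Proof. by []. Qed.

Lemma msumE' d (T : sigmaRingType d) (R : realType) (mu : {measure set T -> \bar R}^nat) n A :
  msum mu n A = (\sum_(k < n) mu k A)%E.
Proof. by []. Qed.

Lemma mu_xi_le1 (R : realType) d (mu : probability (Rd R d) R) m (xi : 'I_m -> 'rV[R]_d)
  (A : set (Rd R d)) : measurable A -> (0 < m)%N -> (mu_xi mu xi A <= 1)%E.
Proof.
move=> mA m0.
rewrite /mu_xi measure_addE.
rewrite [X in (X + _)%E]mscaleE' [X in (_ + X)%E]mscaleE' [X in (_ + _ * X)%E]msumE' /=.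
have h1 : (mu A <= 1)%E by apply: probability_le1.
have h3 : (0 <= mu A)%E by [].
set b := (\sum_(k < m) _)%R.
have h2 : (b <= m%:R%:E)%E.
  rewrite /b -[m in leRHS]card_ord -sum1_card natr_sum -sumEFin.
  apply: lee_sum => k _; case: insub => [i|] /=; rewrite ?diracE ?lee_fin.
    by case: (_ \in _).
  by [].
have h4 : (0 <= b)%E.
  by apply: sume_ge0 => k _; case: insub.
move: h1 h2 h3 h4.
set a := mu A.
case: a => [a| |] //; case: b => [b| |] //.
rewrite !lee_fin => h1 h2 h3 h4.
have hp : (0 <= (2^-1 : R)) by rewrite invr_ge0 ler0n.
have hq : (0 <= ((2 * m)%:R^-1 : R)) by rewrite invr_ge0 ler0n.

have hm : (0 < m%:R :> R) by rewrite ltr0n.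
rewrite [leRHS](_ : _ = 2^-1 * 1 + (2 * m)%:R^-1 * m%:R :> R); last first.
  by rewrite natrM invfM -mulrA mulVf ?gt_eqF // !mulr1; field.
by apply: lerD; apply: ler_wpM2l.
Qed.
Section Alg.
Variables (R : realFieldType) (N : nat) (G : 'I_N -> 'I_N -> R).
Hypothesis Gsym : forall i j, G i j = G j i.

Definition Bf (a b : 'I_N -> R) := \sum_(i < N) \sum_(j < N) a i * b j * G i j.
Definition Qf a := Bf a a.

Lemma Bf_ext a a' b b' : (forall i, a i = a' i) -> (forall i, b i = b' i) -> Bf a b = Bf a' b'.
Proof.
move=> ha hb; apply: eq_bigr => i _; apply: eq_bigr => j _; by rewrite ha hb.
Qed.

Lemma Qf_ext a a' : (forall i, a i = a' i) -> Qf a = Qf a'.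
Proof. by move=> h; apply: Bf_ext. Qed.

Lemma Bf_sym a b : Bf a b = Bf b a.
Proof.
rewrite /Bf exchange_big; apply: eq_bigr => i _; apply: eq_bigr => j _.
by rewrite Gsym; ring.
Qed.

Lemma Bf_linr a (p : 'I_N -> R) (w : 'I_N -> 'I_N -> R) :
  Bf a (fun k => \sum_(j < N) p j * w j k) = \sum_(j < N) p j * Bf a (w j).
Proof.
rewrite /Bf.
transitivity (\sum_(i < N) \sum_(k < N) \sum_(j < N) p j * (a i * w j k * G i k)).
  apply: eq_bigr => i _; apply: eq_bigr => k _.
  rewrite mulr_sumr mulr_suml; apply: eq_bigr => j _; ring.
rewrite [RHS](eq_bigr (fun j => \sum_(i < N) \sum_(k < N) p j * (a i * w j k * G i k))); last first.
  move=> j _; rewrite mulr_sumr; apply: eq_bigr => i _; rewrite mulr_sumr. reflexivity.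
rewrite [LHS](eq_bigr (fun i => \sum_(j < N) \sum_(k < N) p j * (a i * w j k * G i k))); last first.
  by move=> i _; exact: exchange_big.
exact: exchange_big.
Qed.

Lemma Bf0r a b : (forall k, b k = 0) -> Bf a b = 0.
Proof.
move=> hb; apply: big1 => i _; apply: big1 => j _; by rewrite hb mulr0 mul0r.
Qed.

Lemma Qf_add a b : Qf (fun i => a i + b i) = Qf a + 2 * Bf a b + Qf b.
Proof.
rewrite /Qf /Bf.
have -> : \sum_(i < N) \sum_(j < N) (a i + b i) * (a j + b j) * G i j =
  \sum_(i < N) \sum_(j < N) (a i * a j * G i j + (a i * b j * G i j + b i * a j * G i j) + b i * b j * G i j).
  by apply: eq_bigr => i _; apply: eq_bigr => j _; ring.
rewrite (eq_bigr (fun i => \sum_(j < N) (a i * a j * G i j + (a i * b j * G i j + b i * a j * G i j)) + \sum_(j < N) b i * b j * G i j)); last by move=> i _; rewrite big_split.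
rewrite big_split /=; congr (_ + _).
rewrite (eq_bigr (fun i => \sum_(j < N) (a i * a j * G i j) + \sum_(j < N) (a i * b j * G i j + b i * a j * G i j))); last by move=> i _; rewrite big_split.
rewrite big_split /=; congr (_ + _).
rewrite (eq_bigr (fun i => \sum_(j < N) (a i * b j * G i j) + \sum_(j < N) (b i * a j * G i j))); last by move=> i _; rewrite big_split.
rewrite big_split /=.
have := Bf_sym b a; rewrite /Bf => ->.
by rewrite mulr2n mulrDl !mul1r.
Qed.

Lemma Qf_scale k a : Qf (fun i => k * a i) = k ^+ 2 * Qf a.
Proof.
rewrite /Qf /Bf mulr_sumr; apply: eq_bigr => i _; rewrite mulr_sumr; apply: eq_bigr => j _; ring.
Qed.

Lemma var_id (p : 'I_N -> R) (w : 'I_N -> 'I_N -> R) e :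
  \sum_(j < N) p j = 1 -> (forall k, \sum_(j < N) p j * w j k = 0) ->
  \sum_(j < N) p j * Qf (fun i => e i + w j i) = Qf e + \sum_(j < N) p j * Qf (w j).
Proof.
move=> p1 pw.
rewrite (eq_bigr (fun j => (p j * Qf e + p j * (2 * Bf e (w j))) + p j * Qf (w j))); last first.
  by move=> j _; rewrite Qf_add; ring.
rewrite big_split big_split /= -mulr_suml p1 mul1r; congr (_ + _).
rewrite (eq_bigr (fun j => 2 * (p j * Bf e (w j)))); last by move=> j _; ring.
by rewrite -mulr_sumr -Bf_linr Bf0r // mulr0 addr0.
Qed.

Lemma exists_le (p y : 'I_N -> R) M : (forall j, 0 <= p j) -> \sum_(j < N) p j = 1 ->
  \sum_(j < N) p j * y j <= M -> exists j, 0 < p j /\ y j <= M.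
Proof.
move=> p0 p1 hM.
case: (boolP [exists j, (0 < p j) && (y j <= M)]) => [/existsP [j /andP [h1 h2]]|].
  by exists j.
rewrite negb_exists => /forallP hall.
have [j0 hj0] : exists j, 0 < p j.
  case: (boolP [exists j, 0 < p j]) => [/existsP [j hj]|]; first by exists j.
  rewrite negb_exists => /forallP hz.
  have : \sum_(j < N) p j = 0.
    apply: big1 => j _; have := hz j; rewrite lt_def negb_and negbK p0 orbF.
    by move/eqP.
  by rewrite p1 => /eqP; rewrite oner_eq0.
have hpos : 0 < \sum_(j < N) p j * (y j - M).
  rewrite (bigD1 j0) //=; apply: ltr_pwDl.
    apply: mulr_gt0 => //; rewrite subr_gt0.
    by have := hall j0; rewrite hj0 /= -ltNge.
  apply: sumr_ge0 => j _; have := hall j; have := p0 j.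
  rewrite le_eqVlt => /orP [/eqP <-|pj]; first by rewrite mul0r.
  by rewrite pj /= -ltNge => h; apply: mulr_ge0; rewrite ?subr_ge0 ?ltW.
move: hpos; rewrite (eq_bigr (fun j => p j * y j - p j * M)); last by move=> j _; rewrite mulrBr.
by rewrite sumrB -mulr_suml p1 mul1r subr_gt0 ltNge hM.
Qed.


Lemma Qf0 a : (forall k, a k = 0) -> Qf a = 0.
Proof. by move=> h; apply: Bf0r. Qed.

Lemma maurey (c : 'I_N -> R) (S : R) (X : 'I_N -> 'I_N -> R) (p : 'I_N -> R) :
  (forall a, 0 <= Qf a) -> (forall j, 0 <= p j) -> \sum_(j < N) p j = 1 ->
  (forall k, \sum_(j < N) p j * X j k = c k) -> (forall j, Qf (X j) <= S ^+ 2) ->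
  forall n : nat, exists s : seq 'I_N, [/\ size s = n, (forall j, j \in s -> 0 < p j) &
    Qf (fun k => n%:R * c k - \sum_(j <- s) X j k) <= n%:R * S ^+ 2].
Proof.
move=> psd p0 p1 pX XS; elim=> [|n [s [sz sp hQ]]].
  exists [::]; split => //; rewrite mul0r Qf0 // => k; by rewrite big_nil mul0r subr0.
set e := fun k => n%:R * c k - \sum_(j <- s) X j k.
have hw : forall k, \sum_(j < N) p j * (c k - X j k) = 0.
  move=> k; rewrite (eq_bigr (fun j => p j * c k - p j * X j k)); last by move=> j _; rewrite mulrBr.
  by rewrite sumrB -mulr_suml p1 mul1r pX subrr.
have hw' : forall k, \sum_(j < N) p j * (X j k - c k) = 0.
  move=> k; rewrite (eq_bigr (fun j => p j * X j k - p j * c k)); last by move=> j _; rewrite mulrBr.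
  by rewrite sumrB -mulr_suml p1 mul1r pX subrr.
have h1 := var_id e p1 hw.
have h2 := var_id c p1 hw'.
have hQw : forall j, Qf (fun k => c k - X j k) = Qf (fun k => X j k - c k).
  move=> j; rewrite -[RHS]mul1r (_ : 1 = (-1) ^+ 2); last by rewrite sqrrN expr1n.
  rewrite -Qf_scale; apply: Qf_ext => k; ring.
have hQX : forall j, Qf (fun i => c i + (X j i - c i)) = Qf (X j).
  by move=> j; apply: Qf_ext => k; ring.
have hsum : \sum_(j < N) p j * Qf (fun k => c k - X j k) <= S ^+ 2.
  rewrite (eq_bigr (fun j => p j * Qf (fun k => X j k - c k))); last by move=> j _; rewrite hQw.
  have -> : \sum_(j < N) p j * Qf (fun k => X j k - c k) = \sum_(j < N) p j * Qf (X j) - Qf c.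
    rewrite -(eq_bigr _ (fun j _ => congr1 (fun z => p j * z) (hQX j))) h2; ring.
  rewrite lerBlDr; apply: ler_wpDr; first exact: psd.
  rewrite -[leRHS]mul1r -p1 mulr_suml; apply: ler_sum => j _.
  by apply: ler_wpM2l.
have hav : \sum_(j < N) p j * Qf (fun i => e i + (c i - X j i)) <= n.+1%:R * S ^+ 2.
  by rewrite h1 -addn1 natrD mulrDl mul1r; apply: lerD.
have [j [pj hj]] := exists_le p0 p1 hav.
exists (j :: s); split => //=; first by rewrite sz.
  by move=> i; rewrite in_cons => /orP [/eqP ->|/sp].
apply: le_trans hj; rewrite le_eqVlt; apply/orP; left; apply/eqP.
apply: Qf_ext => k; rewrite /e big_cons -addn1 natrD; ring.
Qed.


Lemma sum_delta (F : 'I_N -> R) j : \sum_(i < N) (i == j)%:R * F i = F j.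
Proof.
rewrite (bigD1 j) //= eqxx mul1r big1 ?addr0 // => i /negbTE ->; by rewrite mul0r.
Qed.

Lemma Qf_delta j al : Qf (fun k => (k == j)%:R * al) = al ^+ 2 * G j j.
Proof.
rewrite /Qf /Bf.
rewrite (eq_bigr (fun i => (i == j)%:R * \sum_(k < N) (k == j)%:R * (al ^+ 2 * G i k))); last first.
  by move=> i _; rewrite mulr_sumr; apply: eq_bigr => k _; rewrite expr2; ring.
by rewrite sum_delta sum_delta.
Qed.

End Alg.

Lemma extend_set (T : finType) (A : {set T}) n : (#|A| <= n)%N -> (n <= #|T|)%N ->
  exists J : {set T}, A \subset J /\ #|J| = n.
Proof.
move=> hA hn; have [k hk] : exists k, n = (#|A| + k)%N by exists (n - #|A|)%N; rewrite subnKC.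
elim: k A hA hk => [|k IH] A hA hk.
  by exists A; rewrite hk addn0.
have hC : (0 < #|~: A|)%N.
  have := cardsC A; move: hn; rewrite hk; lia.
move: hC; rewrite card_gt0 => /set0Pn [x]; rewrite inE => hxA.
have hc : #|x |: A| = (#|A| + 1)%N by rewrite cardsU1 hxA addnC.
have [J [h1 h2]] := IH (x |: A) ltac:(rewrite hc; lia) ltac:(rewrite hc; lia).
exists J; split => //; apply: (fintype.subset_trans _ h1); exact: finset.subsetUr.
Qed.



Lemma card_head N v : (v <= N)%N -> (#|[set k : 'I_N | (k < v)%N]%SET| <= v)%N.
Proof.
move=> hv.
apply: (leq_trans (n := #|[set widen_ord hv x | x in 'I_v]%SET|)).
  apply: subset_leq_card; apply/fintype.subsetP => k; rewrite inE => hk.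
  apply/imsetP; exists (Ordinal hk) => //; exact: val_inj.
by apply: (leq_trans (leq_imset_card _ _)); rewrite card_ord.
Qed.

Lemma alg_main (R : realFieldType) N (G : 'I_N -> 'I_N -> R) (c : 'I_N -> R) (v : nat) :
  (forall i j, G i j = G j i) ->
  (forall a, 0 <= Qf G a) -> (forall j, G j j <= 1) -> (0 < v)%N -> (2 * v <= N)%N ->
  exists (J : {set 'I_N}) (b : 'I_N -> R), [/\ #|J| = (2 * v)%N, (forall i, i \notin J -> b i = 0) &
    Qf G (fun k => c k - b k) <= (\sum_(k < N | (v <= k)%N) `|c k|) ^+ 2 / v%:R].
Proof.
move=> Gsym psd Gd v0 vN.
pose cT := fun k : 'I_N => if (v <= k)%N then c k else 0.
pose S := \sum_(k < N) `|cT k|.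
have hS : \sum_(k < N | (v <= k)%N) `|c k| = S.
  rewrite big_mkcond /S; apply: eq_bigr => k _; rewrite /cT; case: ifP => //; by rewrite normr0.
rewrite hS.
have S0 : 0 <= S by apply: sumr_ge0.
suff [A [b [hA hb hQ]]] : exists (A : {set 'I_N}) (b : 'I_N -> R), [/\ (#|A| <= 2 * v)%N,
    (forall i, i \notin A -> b i = 0) & Qf G (fun k => c k - b k) <= S ^+ 2 / v%:R].
  have [J [hAJ hJ]] := extend_set hA ltac:(by rewrite card_ord).
  exists J, b; split => // i hi; apply: hb; apply/negP => hiA; move/negP: hi; apply.
  exact: (fintype.subsetP hAJ).
have hH := @card_head N v ltac:(lia).
case: (eqVneq S 0) => [S00|Sn0].
  exists [set k : 'I_N | (k < v)%N]%SET, (fun k : 'I_N => if (v <= k)%N then 0 else c k); split.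
  - by apply: (leq_trans hH); lia.
  - by move=> i; rewrite inE -leqNgt => ->.
  - rewrite S00 expr0n /= mul0r Qf0 // => k.
    have := psumr_eq0P (P := predT) (F := fun k => `|cT k|) (fun _ _ => normr_ge0 _) S00 (i := k) isT.
    rewrite /cT; case: ifP => _; last by rewrite subrr.
    by move/normr0_eq0 ->; rewrite subr0.
have Sp : 0 < S by rewrite lt_def Sn0 S0.
pose p := fun j => `|cT j| / S.
pose X := fun j (k : 'I_N) => (k == j)%:R * (Num.sg (cT j) * S).
have p0 : forall j, 0 <= p j by move=> j; apply: divr_ge0.
have p1 : \sum_(j < N) p j = 1 by rewrite -mulr_suml mulfV.
have pX : forall k, \sum_(j < N) p j * X j k = cT k.
  move=> k; rewrite (eq_bigr (fun j => (j == k)%:R * (p j * (Num.sg (cT j) * S)))); last first.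
    by move=> j _; rewrite /X eq_sym; ring.
  rewrite sum_delta /p.
  rewrite (_ : `|cT k| / S * (Num.sg (cT k) * S) = Num.sg (cT k) * `|cT k|); last first.
    by field.
  by rewrite mulr_sg_norm.
have XS : forall j, Qf G (X j) <= S ^+ 2.
  move=> j; rewrite /X Qf_delta exprMn sqr_sg.
  have hG0 : 0 <= G j j.
    have := psd (fun k => (k == j)%:R * 1); rewrite Qf_delta expr1n => h; lra.
  case: (cT j != 0); rewrite /= ?mulr1n ?mulr0n ?mul1r ?mul0r ?sqr_ge0 //.
  by rewrite -[leRHS]mulr1 ler_wpM2l // sqr_ge0.
have [s [sz sp hQ]] := maurey Gsym psd p0 p1 pX XS v.
pose bT := fun k => (\sum_(j <- s) X j k) / v%:R.
exists ([set k : 'I_N | (k < v)%N]%SET :|: [set k | k \in s]%SET),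
  (fun k : 'I_N => (if (v <= k)%N then 0 else c k) + bT k); split.
- rewrite cardsU; apply: (leq_trans (leq_subr _ _)).
  rewrite mul2n -addnn; apply: leq_add => //.
  by rewrite cardsE -sz card_size.
- move=> i; rewrite !inE negb_or -leqNgt => /andP [-> his]; rewrite add0r /bT.
  rewrite big1_seq ?mul0r // => j /andP [_ hj]; rewrite /X.
  have -> : (i == j) = false by apply/negP => /eqP hij; move: his; rewrite hij hj.
  by rewrite mul0r.
- have vp : 0 < v%:R :> R by rewrite ltr0n.
  rewrite (@Qf_ext _ _ G _ (fun k => v%:R^-1 * (v%:R * cT k - \sum_(j <- s) X j k))); last first.
    move=> k; rewrite /bT /cT; case: ifP => _; field; by rewrite gt_eqF.
  rewrite Qf_scale; apply: (le_trans (ler_wpM2l _ hQ)); first exact: sqr_ge0.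
  rewrite le_eqVlt; apply/orP; left; apply/eqP; field; by rewrite gt_eqF.
Qed.

Lemma Bbound (R : realType) N (v : nat) (r : R) (c : 'I_N -> R) : 0 <= r -> (0 < v)%N ->
  \sum_(j < N) `|c j| * (j.+1%:R `^ r) <= 1 ->
  (\sum_(k < N | (v <= k)%N) `|c k|) ^+ 2 / v%:R <= (v%:R `^ (- r - 2^-1)) ^+ 2.
Proof.
move=> r0 v0 hc.
set S := \sum_(k < N | (v <= k)%N) `|c k|.
have vp : 0 < v%:R :> R by rewrite ltr0n.
have vrp : 0 < v%:R `^ r by apply: powR_gt0.
have S0 : 0 <= S by apply: sumr_ge0.
have hS : S * v%:R `^ r <= 1.
  apply: le_trans hc; rewrite /S mulr_suml.
  apply: (le_trans (y := \sum_(k < N | (v <= k)%N) `|c k| * (k.+1%:R `^ r))).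
    apply: ler_sum => k hk; apply: ler_wpM2l => //.
    apply: ge0_ler_powR => //; rewrite ?nnegrE ?ler0n //.
    by rewrite ler_nat; apply: leqW.
  rewrite [leRHS](bigID (fun k : 'I_N => (v <= k)%N)) /= lerDl.
  apply: sumr_ge0 => k _; apply: mulr_ge0 => //; exact: powR_ge0.
have -> : v%:R `^ (- r - 2^-1) = (v%:R `^ r)^-1 * (Num.sqrt v%:R)^-1.
  rewrite powRD; last by apply/implyP => _; rewrite gt_eqF.
  by rewrite !powRN powR12_sqrt // ler0n.
have sp : 0 < Num.sqrt (v%:R : R) by rewrite sqrtr_gt0.
rewrite exprMn.
have -> : (Num.sqrt (v%:R : R))^-1 ^+ 2 = v%:R^-1.
  by rewrite exprVn sqr_sqrtr ?ler0n.
rewrite ler_pM2r ?invr_gt0 //.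
have hS' : S <= (v%:R `^ r)^-1 by rewrite -[leRHS]mul1r ler_pdivlMr.
by rewrite !expr2; apply: ler_pM.
Qed.


Section Ana.
Variables (R : realType) (d : nat) (Omega : set 'rV[R]_d) (nu : {measure set (Rd R d) -> \bar R}).
Hypothesis mO : measurable (Omega : set (Rd R d)).
Hypothesis nuO : (nu (Omega : set (Rd R d)) <= 1)%E.

Lemma nuO_fin : (nu (Omega : set (Rd R d)) < +oo)%E.
Proof. by apply: (le_lt_trans nuO); rewrite ltry. Qed.

Lemma intg (h : 'rV[R]_d -> R) M : measurable_fun (Omega : set (Rd R d)) h ->
  (forall x, Omega x -> `|h x| <= M) -> nu.-integrable (Omega : set (Rd R d)) (EFin \o h).
Proof.
move=> mh hM; apply: measurable_bounded_integrable => //; first exact: nuO_fin.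
exists M; split; first by rewrite num_real.
move=> y My x Ox; apply: (le_trans (hM x Ox)); exact: ltW.
Qed.


Variables (N : nat) (phi : 'I_N -> 'rV[R]_d -> R).
Hypothesis mphi : forall j, measurable_fun (Omega : set (Rd R d)) (phi j).
Hypothesis bphi : forall j x, Omega x -> `|phi j x| <= 1.

Definition gram i j := fine (\int[nu]_(x in (Omega : set (Rd R d))) (phi i x * phi j x)%:E).

Lemma int_pp k i j : nu.-integrable (Omega : set (Rd R d)) (fun x => (k * (phi i x * phi j x))%:E).
Proof.
apply: (@intg _ `|k|) => [|x Ox].
  by apply: measurable_funM; [exact: measurable_cst | exact: measurable_funM].
rewrite !normrM -[leRHS]mulr1; apply: ler_wpM2l => //.
by rewrite -[1]mulr1; apply: ler_pM => //; apply: bphi.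
Qed.

Lemma int_pp1 i j : nu.-integrable (Omega : set (Rd R d)) (fun x => (phi i x * phi j x)%:E).
Proof.
apply: (@intg _ 1) => [|x Ox]; first exact: measurable_funM.
by rewrite !normrM -[1]mulr1; apply: ler_pM => //; apply: bphi.
Qed.

Lemma gram_eq a : (\int[nu]_(x in (Omega : set (Rd R d))) ((\sum_(j < N) a j * phi j x) ^+ 2)%:E
  = (Qf gram a)%:E)%E.
Proof.
transitivity (\int[nu]_(x in (Omega : set (Rd R d)))
   (\sum_(p : 'I_N * 'I_N) ((a p.1 * a p.2) * (phi p.1 x * phi p.2 x))%:E))%E.
  apply: eq_integral => x _; rewrite sumEFin; congr EFin.
  rewrite expr2 mulr_suml (eq_bigr (fun i => \sum_(j < N) a i * phi i x * (a j * phi j x))); last first.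
    by move=> i _; rewrite mulr_sumr.
  rewrite pair_bigA; apply: eq_bigr => p _; ring.
rewrite integral_sum //; last by move=> p; exact: int_pp.
rewrite (eq_bigr (fun p : 'I_N * 'I_N => ((a p.1 * a p.2) * gram p.1 p.2)%:E)); last first.
  move=> p _; under eq_integral do rewrite EFinM.
  rewrite integralZl //; last exact: int_pp1.
  have hf := integrable_fin_num mO (int_pp1 p.1 p.2).
  by rewrite /gram [in RHS]EFinM fineK.
rewrite sumEFin /Qf /Bf pair_bigA /=; congr EFin; apply: eq_bigr => p _; ring.
Qed.


Lemma gram_sym i j : gram i j = gram j i.
Proof. by rewrite /gram; congr fine; apply: eq_integral => x _; rewrite mulrC. Qed.

Lemma gram_psd a : 0 <= Qf gram a.
Proof.
rewrite -lee_fin -gram_eq; apply: integral_ge0 => x _; rewrite lee_fin; exact: sqr_ge0.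
Qed.

Lemma gram_diag j : gram j j <= 1.
Proof.
have hf := integrable_fin_num mO (int_pp1 j j).
rewrite /gram -lee_fin fineK //.
apply: le_trans nuO.
apply: (@le_trans _ _ (\int[nu]_(x in (Omega : set (Rd R d))) (cst 1%E x))%E).
  apply: ge0_le_integral => //.
  - by move=> x _; rewrite lee_fin -expr2 sqr_ge0.
  - by apply/measurable_EFinP; exact: measurable_funM.
  - move=> x Ox; rewrite lee_fin -expr2 -real_normK ?num_real //.
    by rewrite expr2 -[1]mulr1; apply: ler_pM => //; apply: bphi.
by rewrite integral_cst // mul1e.
Qed.


Lemma meas_lin (a : 'I_N -> R) : measurable_fun (Omega : set (Rd R d)) (fun x => \sum_(j < N) a j * phi j x).
Proof.
apply: measurable_sum => j; apply: measurable_funM => //; exact: measurable_cst.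
Qed.

Lemma bound_lin (a : 'I_N -> R) x : Omega x -> `|\sum_(j < N) a j * phi j x| <= \sum_(j < N) `|a j|.
Proof.
move=> Ox; apply: (le_trans (ler_norm_sum _ _ _)); apply: ler_sum => j _.
by rewrite normrM -[leRHS]mulr1; apply: ler_wpM2l => //; apply: bphi.
Qed.

Lemma pt_ineq (y z t dl : R) : 0 < t -> `|y| <= dl ->
  (y + z) ^+ 2 <= (1 + t) * z ^+ 2 + (1 + t^-1) * dl ^+ 2.
Proof.
move=> t0 hy.
have hy2 : y ^+ 2 <= dl ^+ 2.
  rewrite -real_normK ?num_real // ler_sqr ?nnegrE //; exact: le_trans hy.
have k1 : 0 <= (t * z - y) ^+ 2 / t by apply: divr_ge0; [exact: sqr_ge0 | exact: ltW].
have k2 : (t * z - y) ^+ 2 / t = t * z ^+ 2 - 2 * y * z + y ^+ 2 * t^-1.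
  by field; rewrite gt_eqF.
have k3 : 0 <= t^-1 * (dl ^+ 2 - y ^+ 2).
  by apply: mulr_ge0; [rewrite invr_ge0 ltW | rewrite subr_ge0].
rewrite k2 in k1.
have e : (1 + t) * z ^+ 2 + (1 + t^-1) * dl ^+ 2 - (y + z) ^+ 2 =
  (t * z ^+ 2 - 2 * y * z + y ^+ 2 * t^-1) + (dl ^+ 2 - y ^+ 2) + t^-1 * (dl ^+ 2 - y ^+ 2) by ring.
rewrite -subr_ge0 e; apply: addr_ge0 => //; apply: addr_ge0 => //; by rewrite subr_ge0.
Qed.


Lemma L2_bound (f : 'rV[R]_d -> R) (c b : 'I_N -> R) (J : {set 'I_N}) (B dl : R) :
  measurable_fun (Omega : set (Rd R d)) f ->
  0 < B -> 0 < dl -> (forall i, i \notin J -> b i = 0) ->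
  Qf gram (fun k => c k - b k) <= B ^+ 2 ->
  (forall x, Omega x -> `|f x - \sum_(j < N) c j * phi j x| <= dl) ->
  (L2dist nu Omega f (fun x => (\sum_(j in J) b j * phi j x)%R) <= (B + dl)%:E)%E.
Proof.
move=> mf B0 d0 hb hQ hf.
pose u := fun x => \sum_(j < N) (c j - b j) * phi j x.
pose t := dl / B.
have t0 : 0 < t by apply: divr_gt0.
have hJ : forall x, \sum_(j in J) b j * phi j x = \sum_(j < N) b j * phi j x.
  move=> x; rewrite big_mkcond; apply: eq_bigr => j _; case: ifP => // hj.
  by rewrite hb ?hj // mul0r.
have eg : (fun x => (\sum_(j in J) b j * phi j x)%R) = (fun x => \sum_(j < N) b j * phi j x).
  by apply/funext => x; exact: hJ.
rewrite eg.
have hu : forall x, f x - \sum_(j < N) b j * phi j x = (f x - \sum_(j < N) c j * phi j x) + u x.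
  move=> x.
  have -> : u x = \sum_(j < N) c j * phi j x - \sum_(j < N) b j * phi j x.
    by rewrite /u -sumrB; apply: eq_bigr => j _; rewrite mulrBl.
  ring.
pose K := (1 + t^-1) * dl ^+ 2.
have hpt : forall x, Omega x ->
    `|f x - \sum_(j < N) b j * phi j x| ^+ 2 <= (1 + t) * u x ^+ 2 + K.
  move=> x Ox; rewrite real_normK ?num_real // hu; apply: pt_ineq => //; exact: hf.
have mu2 : measurable_fun (Omega : set (Rd R d)) (fun x => u x ^+ 2).
  by apply: measurable_funX; exact: meas_lin.
have iu : nu.-integrable (Omega : set (Rd R d)) (fun x => (u x ^+ 2)%:E).
  apply: (@intg _ ((\sum_(j < N) `|c j - b j|) ^+ 2)) => // x Ox.
  have h0 : 0 <= \sum_(j < N) `|c j - b j| by apply: sumr_ge0.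
  by rewrite normrX lerXn2r ?nnegrE //; exact: bound_lin.
have iK : nu.-integrable (Omega : set (Rd R d)) (fun x => (cst K x)%:E).
  by apply: (@intg _ `|K|) => //; exact: measurable_cst.
have hint : (\int[nu]_(x in (Omega : set (Rd R d))) (`|f x - \sum_(j < N) b j * phi j x| ^+ 2)%:E <=
     ((1 + t) * Qf gram (fun k => c k - b k))%:E + K%:E * nu (Omega : set (Rd R d)))%E.
  apply: (@le_trans _ _ (\int[nu]_(x in (Omega : set (Rd R d))) ((1 + t) * u x ^+ 2 + K)%:E)%E).
    apply: ge0_le_integral.
    - exact: mO.
    - by move=> x _; rewrite lee_fin sqr_ge0.
    - apply/measurable_EFinP; apply: measurable_funX; apply: measurableT_comp => //.
      by apply: measurable_funB => //; apply: measurable_sum => j; apply: measurable_funM => //; exact: measurable_cst.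
    - apply/measurable_EFinP; apply: measurable_funD; last exact: measurable_cst.
      by apply: measurable_funM => //; exact: measurable_cst.
    - by move=> x Ox; rewrite lee_fin; apply: hpt.
  under eq_integral do rewrite EFinD.
  rewrite integralD //; last first.
    have := integrableZl mO (1 + t) iu.
    by apply: eq_integrable => // x _; rewrite EFinM.
  under eq_integral do rewrite EFinM.
  rewrite integralZl // integral_cst //.
  have := gram_eq (fun k => c k - b k); rewrite /= /u => ->.
  by rewrite EFinM.
have nu0 : (0 <= nu (Omega : set (Rd R d)))%E by [].
have nufin : nu (Omega : set (Rd R d)) \is a fin_num by rewrite ge0_fin_numE // nuO_fin.
set w := fine (nu (Omega : set (Rd R d))).
have ew : nu (Omega : set (Rd R d)) = w%:E by rewrite fineK.
have w0 : 0 <= w by rewrite -lee_fin -ew.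
have w1 : w <= 1 by rewrite -lee_fin -ew.
rewrite ew in hint.
set X := (\int[nu]_(x in (Omega : set (Rd R d))) (`|f x - \sum_(j < N) b j * phi j x| ^+ 2)%:E)%E in hint.
have X0 : (0 <= X)%E by apply: integral_ge0 => x _; rewrite lee_fin sqr_ge0.
have hX : (X <= ((B + dl) ^+ 2)%:E)%E.
  apply: (le_trans hint); rewrite -EFinM -EFinD lee_fin.
  have K0 : 0 <= K by apply: mulr_ge0; [apply: addr_ge0 => //; rewrite invr_ge0 ltW | exact: sqr_ge0].
  apply: (@le_trans _ _ ((1 + t) * B ^+ 2 + K)).
    apply: lerD; first by apply: ler_wpM2l => //; apply: addr_ge0 => //; exact: ltW.
    by rewrite -[leRHS]mulr1; apply: ler_wpM2l.
  rewrite le_eqVlt; apply/orP; left; apply/eqP; rewrite /K /t; field.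
  by rewrite !gt_eqF.
have Xfin : X \is a fin_num by rewrite ge0_fin_numE // (le_lt_trans hX) // ltry.
rewrite /L2dist -/X -(fineK Xfin) poweR_EFin lee_fin.
have x0 : 0 <= fine X by rewrite fine_ge0.
rewrite powR12_sqrt // -(@ger0_norm _ (B + dl)); last by apply: addr_ge0; exact: ltW.
rewrite -sqrtr_sqr; apply: ler_wsqrtr.
by rewrite -lee_fin fineK.
Qed.

End Ana.

Unset Implicit Arguments.

Theorem proposition3p1 (R : realType) (d : nat) (Omega : set 'rV[R]_d)
  (mu : probability (Rd R d) R) (N : nat) (phi : 'I_N -> 'rV[R]_d -> R)
  (r : R) (F : set ('rV[R]_d -> R)) (v m : nat) (xi : 'I_m -> 'rV[R]_d) :
  compact Omega ->
  mu (Omega : set (Rd R d)) = 1%E ->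
  (forall j, {within Omega, continuous (phi j)}) ->
  (forall j x, Omega x -> `|phi j x| <= 1) ->
  0 <= r ->
  (forall f, F f -> {within Omega, continuous f}) ->
  (dist_inf Omega phi r F < +oo)%E ->
  (1 <= v)%N -> (2 * v <= N)%N ->
  (0 < m)%N ->
  (forall j, Omega (xi j)) ->
  (sigma_w (mu_xi mu xi) Omega phi (2 * v) F
     <= (v%:R `^ (- r - 2^-1))%:E + dist_inf Omega phi r F)%E.
Proof.
move=> cO muO cphi bphi r0 cF dfin v1 vN m0 xiO.
set nu := mu_xi mu xi.
have mO := Rd_compact_meas cO.
have nuO : (nu (Omega : set (Rd R d)) <= 1)%E by apply: mu_xi_le1.
have mphi : forall j, measurable_fun (Omega : set (Rd R d)) (phi j).
  by move=> j; apply: Rd_cont_meas => //; exact: cphi.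
have [x0 Ox0] : exists x, Omega x.
  apply/set0P; apply/eqP => h0; move: muO; rewrite h0 measure0 => /eqP.
  by rewrite eq_sym onee_eq0.
set B := v%:R `^ (- r - 2^-1).
have B0 : 0 < B by apply: powR_gt0; rewrite ltr0n.
apply: ub_ereal_sup => _ [f Ff <-].
set Df := ereal_inf [set supdist Omega f g | g in A1r phi r].
have hDf : (Df <= dist_inf Omega phi r F)%E by apply: ereal_sup_ubound; exists f.
have Df0 : (0 <= Df)%E.
  apply: le_ereal_inf_tmp => _ [g _ <-].
  apply: (@le_trans _ _ (`|f x0 - g x0|)%:E); first by rewrite lee_fin.
  by apply: ereal_sup_ubound; exists x0.
have Dffin : Df \is a fin_num by rewrite ge0_fin_numE // (le_lt_trans hDf dfin).
set d0 := fine Df.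
have eD : Df = d0%:E by rewrite fineK.
have d00 : 0 <= d0 by rewrite -lee_fin -eD.
apply: (@le_trans _ _ (B + d0)%:E); last by rewrite EFinD leeD2l // -eD.
apply/lee_addgt0Pr => e e0.
have : (Df < (d0 + e)%:E)%E by rewrite eD lte_fin ltrDl.
case/ereal_inf_lt => _ [g [c [hc eg]] <-] hsup.
have hfg : forall x, Omega x -> `|f x - \sum_(j < N) c j * phi j x| <= d0 + e.
  move=> x Ox; rewrite -lee_fin; apply: le_trans (ltW hsup).
  by apply: ereal_sup_ubound; exists x => //; rewrite eg.
have [J [b [cJ hb hQ]]] := alg_main c (gram_sym Omega nu phi) (gram_psd mO nuO mphi bphi)
  (gram_diag mO nuO mphi bphi) v1 vN.
have hQ' := le_trans hQ (Bbound r0 v1 hc).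
have hL := L2_bound mO nuO mphi bphi (Rd_cont_meas mO (cF f Ff)) B0 (ltr_wpDl d00 e0) hb hQ' hfg.
apply: (le_trans (ereal_inf_lbound _)).
  by exists (fun x => (\sum_(j in J) b j * phi j x)%R) => //; exists J, b.
by apply: (le_trans hL); rewrite -EFinD addrA.
Qed.
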